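(* Let $(V_1,\dots,V_n)$ be an $n$-tuple of doubly non-commuting isometries on $H$, let $A=\{i_1,\dots,i_l\}\subseteq\{1,\dots,n\}$ be a (possibly empty) set of $l$ distinct indices, and let $k_{i_1},\dots,k_{i_l}\ge0$. Then $$\big[V_{i_1}^{k_{i_1}}(\mathbf 1-V_{i_1}V_{i_1}^* )V_{i_1}^{*k_{i_1}}\big]\cdots\big[V_{i_l}^{k_{i_l}}(\mathbf 1-V_{i_l}V_{i_l}^* )V_{i_l}^{*k_{i_l}}\big]=\big[V_{i_1}^{k_{i_1}}\cdots V_{i_l}^{k_{i_l}}\big]\big[(\mathbf 1-V_{i_1}V_{i_1}^* )\cdots(\mathbf 1-V_{i_l}V_{i_l}^* )\big]\big[V_{i_l}^{*k_{i_l}}\cdots V_{i_1}^{*k_{i_1}}\big]$$ and $$\big[V_{i_1}^{k_{i_1}}V_{i_1}^{*k_{i_1}}\big]\cdots\big[V_{i_l}^{k_{i_l}}V_{i_l}^{*k_{i_l}}\big]=\big[V_{i_1}^{k_{i_1}}\cdots V_{i_l}^{k_{i_l}}\big]\big[V_{i_l}^{*k_{i_l}}\cdots V_{i_1}^{*k_{i_1}}\big].$$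
   Context: Fix $n\ge1$ and $z_{ij}\in\mathbb T$ ($i\ne j$) with $z_{ji}=\overline{z_{ij}}$; $(V_1,\dots,V_n)$ is doubly non-commuting if the $V_i$ are isometries on $H$ with $V_i^*V_j=\overline{z_{ij}}V_jV_i^*$ for $i\ne j$. $\mathbf 1$ is the identity operator; empty products equal $\mathbf 1$. *)

(* Defs.v *)
From mathcomp Require Import all_boot all_order all_algebra.
Set Implicit Arguments. Unset Strict Implicit. Unset Printing Implicit Defensive.
Import Order.TTheory GRing.Theory Num.Theory.
Local Open Scope ring_scope.

Definition opprod (T : Type) (s : seq (T -> T)) : T -> T :=
  foldr (fun f g => f \o g) id s.

Definition inner_product (C : numClosedFieldType) (H : lmodType C)
  (dot : H -> H -> C) : Prop :=
  [/\ forall (a : C) (x y w : H), dot (a *: x + y) w = a * dot x w + dot y w,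
      forall x y : H, dot y x = (dot x y)^*,
      forall x : H, 0 <= dot x x
    & forall x : H, dot x x = 0 -> x = 0].

Definition op_adjoint (C : numClosedFieldType) (H : lmodType C)
  (dot : H -> H -> C) (T S : H -> H) : Prop :=
  forall x y : H, dot (T x) y = dot x (S y).

Definition op_isometry (C : numClosedFieldType) (H : lmodType C)
  (dot : H -> H -> C) (T : H -> H) : Prop :=
  forall x : H, dot (T x) (T x) = dot x x.

Definition doubly_noncommuting (C : numClosedFieldType) (H : lmodType C)
  (n : nat) (z : 'I_n -> 'I_n -> C) (V Vs : 'I_n -> H -> H) : Prop :=
  forall i j : 'I_n, i != j -> forall x : H,
    Vs i (V j x) = (z i j)^* *: V j (Vs i x).

(* Main.v *)
Require Import Defs.
From mathcomp Require Import all_boot all_order all_algebra ring.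
Import Order.TTheory GRing.Theory Num.Theory.
Local Open Scope ring_scope.
Set Implicit Arguments.

Definition lin (C : numClosedFieldType) (H : lmodType C) (f : H -> H) :=
  forall (a : C) (x y : H), f (a *: x + y) = a *: f x + f y.
Arguments lin {C H}.

Lemma lin0 (C : numClosedFieldType) (H : lmodType C) (f : H -> H) : @lin C H f -> f 0 = 0.
Proof.
move=> hf; have := hf 1 0 0; rewrite !scale1r addr0.
by move/(congr1 (fun v => v - f 0)); rewrite addrK subrr => <-.
Qed.

Lemma linZ (C : numClosedFieldType) (H : lmodType C) (f : H -> H) : @lin C H f -> forall a x, f (a *: x) = a *: f x.
Proof. by move=> hf a x; rewrite -[a *: x]addr0 hf lin0 // addr0. Qed.

Lemma linD (C : numClosedFieldType) (H : lmodType C) (f : H -> H) : @lin C H f -> forall x y, f (x + y) = f x + f y.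
Proof. by move=> hf x y; rewrite -[x]scale1r hf !scale1r. Qed.

Lemma linN (C : numClosedFieldType) (H : lmodType C) (f : H -> H) : @lin C H f -> forall x, f (- x) = - f x.
Proof. by move=> hf x; rewrite -scaleN1r linZ // scaleN1r. Qed.

Lemma linB (C : numClosedFieldType) (H : lmodType C) (f : H -> H) : @lin C H f -> forall x y, f (x - y) = f x - f y.
Proof. by move=> hf x y; rewrite linD // linN. Qed.

Lemma lin_linear (C : numClosedFieldType) (H : lmodType C) (f : {linear H -> H}) : @lin C H f.
Proof. by move=> a x y; rewrite linearD linearZ. Qed.

Lemma lin_comp (C : numClosedFieldType) (H : lmodType C) (f g : H -> H) : @lin C H f -> lin g -> lin (f \o g).
Proof. by move=> hf hg a x y /=; rewrite hg hf. Qed.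

Lemma lin_id (C : numClosedFieldType) (H : lmodType C) : @lin C H id.
Proof. by []. Qed.

Lemma lin_iter (C : numClosedFieldType) (H : lmodType C) (f : H -> H) k : @lin C H f -> lin (iter k f).
Proof. by move=> hf; elim: k => [|k IH] a x y //=; rewrite IH hf. Qed.

Lemma lin_opprod (C : numClosedFieldType) (H : lmodType C) (I : Type) (F : I -> H -> H) (t : seq I) :
  (forall i, @lin C H (F i)) -> lin (opprod (map F t)).
Proof.
move=> hF; elim: t => [|i t IH] a x y //=.
by rewrite IH hF.
Qed.

Lemma lin_B (C : numClosedFieldType) (H : lmodType C) (V Vs : H -> H) : @lin C H V -> lin Vs ->
  lin (fun y => y - V (Vs y)).
Proof.
move=> hV hVs a x y; rewrite hVs hV scalerBr.
by rewrite opprD addrACA.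
Qed.

Lemma opprod_rcons T (s : seq (T -> T)) f x : opprod (rcons s f) x = opprod s (f x).
Proof. by elim: s => [|g s IH] //=; rewrite IH. Qed.

Lemma opprod_comm T (I : eqType) (F : I -> T -> T) (t : seq I) (g : T -> T) :
  (forall i, i \in t -> forall x, g (F i x) = F i (g x)) ->
  forall x, g (opprod (map F t) x) = opprod (map F t) (g x).
Proof.
elim: t => [|i t IH] hs x //=.
rewrite hs ?mem_head // IH // => h hh; apply: hs; by rewrite inE hh orbT.
Qed.

Lemma iter_comm T (f g : T -> T) k : (forall x, g (f x) = f (g x)) ->
  forall x, g (iter k f x) = iter k f (g x).
Proof. by move=> h; elim: k => [|k IH] x //=; rewrite h IH. Qed.


Lemma dotDZl (C : numClosedFieldType) (H : lmodType C) (dot : H -> H -> C) :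
  inner_product dot -> forall a x y w, dot (a *: x + y) w = a * dot x w + dot y w.
Proof. by case. Qed.

Lemma dot0l (C : numClosedFieldType) (H : lmodType C) (dot : H -> H -> C) :
  inner_product dot -> forall w, dot 0 w = 0.
Proof.
move=> hd w; have := dotDZl hd 1 0 0 w; rewrite scale1r addr0 mul1r.
by move/(congr1 (fun v => v - dot 0 w)); rewrite addrK subrr => <-.
Qed.

Lemma dotZl (C : numClosedFieldType) (H : lmodType C) (dot : H -> H -> C) :
  inner_product dot -> forall a x w, dot (a *: x) w = a * dot x w.
Proof. by move=> hd a x w; rewrite -[a *: x]addr0 (dotDZl hd) (dot0l hd) addr0. Qed.

Lemma dotDl (C : numClosedFieldType) (H : lmodType C) (dot : H -> H -> C) :
  inner_product dot -> forall x y w, dot (x + y) w = dot x w + dot y w.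
Proof. by move=> hd x y w; rewrite -{1}[x]scale1r (dotDZl hd) mul1r. Qed.

Lemma dotBl (C : numClosedFieldType) (H : lmodType C) (dot : H -> H -> C) :
  inner_product dot -> forall x y w, dot (x - y) w = dot x w - dot y w.
Proof. by move=> hd x y w; rewrite dotDl // -scaleN1r dotZl // mulN1r. Qed.

Lemma dotC (C : numClosedFieldType) (H : lmodType C) (dot : H -> H -> C) :
  inner_product dot -> forall x y, dot y x = (dot x y)^*.
Proof. by case. Qed.

Lemma dotZr (C : numClosedFieldType) (H : lmodType C) (dot : H -> H -> C) :
  inner_product dot -> forall a x w, dot w (a *: x) = a^* * dot w x.
Proof. by move=> hd a x w; rewrite dotC // dotZl // rmorphM /= -dotC. Qed.

Lemma dotDr (C : numClosedFieldType) (H : lmodType C) (dot : H -> H -> C) :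
  inner_product dot -> forall x y w, dot w (x + y) = dot w x + dot w y.
Proof. by move=> hd x y w; rewrite dotC // dotDl // rmorphD /= -!dotC. Qed.

Lemma dotBr (C : numClosedFieldType) (H : lmodType C) (dot : H -> H -> C) :
  inner_product dot -> forall x y w, dot w (x - y) = dot w x - dot w y.
Proof. by move=> hd x y w; rewrite dotC // dotBl // rmorphB /= -!dotC. Qed.

Lemma dot_real (C : numClosedFieldType) (H : lmodType C) (dot : H -> H -> C) :
  inner_product dot -> forall x, (dot x x)^* = dot x x.
Proof. by move=> hd x; rewrite -dotC. Qed.

Lemma dot_extr (C : numClosedFieldType) (H : lmodType C) (dot : H -> H -> C) :
  inner_product dot -> forall a b, (forall w, dot w a = dot w b) -> a = b.
Proof.
move=> hd a b h; apply/eqP; rewrite -subr_eq0; apply/eqP.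
have [_ _ _ h0] := hd; apply: h0.
by rewrite (dotBr hd) !h subrr.
Qed.

Lemma sub0_eq (C : numClosedFieldType) (a b c d : C) :
  a - b = 0 -> c - d = a - b -> c = d.
Proof. by move=> e1 e2; apply/eqP; rewrite -subr_eq0 e2 e1. Qed.

Lemma iso_dot (C : numClosedFieldType) (H : lmodType C) (dot : H -> H -> C)
  (V : H -> H) : inner_product dot -> lin V -> op_isometry dot V ->
  forall x y, dot (V x) (V y) = dot x y.
Proof.
move=> hd hV iso x y.
have e1 : dot (V x) (V y) + dot (V y) (V x) - (dot x y + dot y x) = 0.
  have := iso (x + y); rewrite (linD hV) !(dotDl hd) !(dotDr hd) !iso.
  move/eqP; rewrite -subr_eq0 => /eqP e; rewrite -e; ring.
have e2 : 'i^* * dot (V x) (V y) + 'i * dot (V y) (V x)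
          - ('i^* * dot x y + 'i * dot y x) = 0.
  have := iso (x + 'i *: y); rewrite (linD hV) (linZ hV) !(dotDl hd) !(dotDr hd).
  rewrite !(dotZl hd) !(dotZr hd) !iso.
  move/eqP; rewrite -subr_eq0 => /eqP e; rewrite -e; ring.
rewrite conjCi in e2.
have e3 : (dot (V x) (V y) - dot x y) * (2%:R * 'i) = 0.
  transitivity ('i * 0 - 0 : C); last by rewrite mulr0 subr0.
  rewrite -{1}e1 -e2; ring.
move/eqP: e3; rewrite mulf_eq0 mulf_eq0 pnatr_eq0 (negbTE (@neq0Ci C)) orbF /=.
by rewrite orbF subr_eq0 => /eqP.
Qed.

Lemma VsV (C : numClosedFieldType) (H : lmodType C) (dot : H -> H -> C)
  (V Vs : H -> H) : inner_product dot -> lin V -> op_isometry dot V ->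
  op_adjoint dot V Vs -> forall x, Vs (V x) = x.
Proof.
move=> hd hV iso adj x; apply: (dot_extr hd) => w.
by rewrite -adj (iso_dot hd hV iso).
Qed.

Lemma VV (C : numClosedFieldType) (H : lmodType C) (dot : H -> H -> C)
  (n : nat) (z : 'I_n -> 'I_n -> C) (V Vs : 'I_n -> H -> H) :
  inner_product dot ->
  (forall i j : 'I_n, i != j -> (z i j)^* * z i j = 1) ->
  (forall i j : 'I_n, i != j -> z j i = (z i j)^*) ->
  (forall i, lin (V i)) ->
  (forall i : 'I_n, op_adjoint dot (V i) (Vs i)) ->
  (forall i : 'I_n, op_isometry dot (V i)) ->
  doubly_noncommuting z V Vs ->
  forall i j, i != j -> forall x, V i (V j x) = z i j *: V j (V i x).
Proof.
move=> hd hz1 hzc hV adj iso hdn i j ij x.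
have ji : j != i by rewrite eq_sym.
have hQP : dot (V j (V i x)) (V i (V j x)) = (z i j)^* * dot x x.
  rewrite adj hdn // hzc // conjCK (VsV hd (hV j) (iso j) (adj j)).
  by rewrite (dotZr hd) iso.
have hPQ : dot (V i (V j x)) (V j (V i x)) = z i j * dot x x.
  by rewrite (dotC hd) hQP rmorphM /= conjCK (dot_real hd).
have e : dot (V i (V j x) - z i j *: V j (V i x)) (V i (V j x) - z i j *: V j (V i x)) = 0.
  rewrite !(dotBl hd) !(dotBr hd) !(dotZl hd) !(dotZr hd) hPQ hQP !iso.
  transitivity (dot x x * (1 - (z i j)^* * z i j)); first by ring.
  by rewrite hz1 // subrr mulr0.
have [_ _ _ h0] := hd; apply/eqP; rewrite -subr_eq0; apply/eqP; exact: h0.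
Qed.

Lemma VsVs (C : numClosedFieldType) (H : lmodType C) (dot : H -> H -> C)
  (n : nat) (z : 'I_n -> 'I_n -> C) (V Vs : 'I_n -> H -> H) :
  inner_product dot ->
  (forall i j : 'I_n, i != j -> (z i j)^* * z i j = 1) ->
  (forall i j : 'I_n, i != j -> z j i = (z i j)^*) ->
  (forall i, lin (V i)) ->
  (forall i : 'I_n, op_adjoint dot (V i) (Vs i)) ->
  (forall i : 'I_n, op_isometry dot (V i)) ->
  doubly_noncommuting z V Vs ->
  forall i j, i != j -> forall x, Vs i (Vs j x) = z i j *: Vs j (Vs i x).
Proof.
move=> hd hz1 hzc hV adj iso hdn i j ij x.
have ji : j != i by rewrite eq_sym.
apply: (dot_extr hd) => w.
rewrite -!adj (VV hd hz1 hzc hV adj iso hdn _ _ ji) (dotZl hd) (dotZr hd) hzc //.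
by rewrite !adj.
Qed.

Lemma K1 (C : numClosedFieldType) (H : lmodType C)
  (n : nat) (z : 'I_n -> 'I_n -> C) (V Vs : 'I_n -> H -> H) :
  (forall i j : 'I_n, i != j -> (z i j)^* * z i j = 1) ->
  (forall i, lin (V i)) ->
  doubly_noncommuting z V Vs ->
  (forall i j, i != j -> forall x, Vs i (Vs j x) = z i j *: Vs j (Vs i x)) ->
  forall i j, i != j -> forall Y : H -> H, lin Y -> (forall x, Vs i (Y x) = Y (Vs i x)) ->
  forall x, Vs i (V j (Y (Vs j x))) = V j (Y (Vs j (Vs i x))).
Proof.
move=> hz1 hV hdn hss i j ij Y hY hYc x.
by rewrite hdn // hYc hss // (linZ hY) (linZ (hV j)) scalerA hz1 // scale1r.
Qed.

Lemma K2 (C : numClosedFieldType) (H : lmodType C)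
  (n : nat) (z : 'I_n -> 'I_n -> C) (V Vs : 'I_n -> H -> H) :
  (forall i j : 'I_n, i != j -> (z i j)^* * z i j = 1) ->
  (forall i, lin (V i)) -> (forall i, lin (Vs i)) ->
  doubly_noncommuting z V Vs ->
  (forall i j, i != j -> forall x, Vs i (Vs j x) = z i j *: Vs j (Vs i x)) ->
  forall i j, i != j -> forall Y : H -> H, lin Y -> (forall x, Vs i (Y x) = Y (Vs i x)) ->
  forall k x, Vs i (iter k (V j) (Y (iter k (Vs j) x)))
              = iter k (V j) (Y (iter k (Vs j) (Vs i x))).
Proof.
move=> hz1 hV hVs hdn hss i j ij Y hY hYc; elim=> [|k IH] x; first exact: hYc.
rewrite !(iterSr k (Vs j)) !(iterS k (V j)).
pose Y' := fun w => iter k (V j) (Y (iter k (Vs j) w)).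
have hY' : lin Y'.
  by move=> a u v; rewrite /Y' (lin_iter k (hVs j)) hY (lin_iter k (hV j)).
exact: (K1 hz1 hV hdn hss _ _ ij hY' IH).
Qed.

Lemma K3 (C : numClosedFieldType) (H : lmodType C)
  (n : nat) (z : 'I_n -> 'I_n -> C) (V Vs : 'I_n -> H -> H) (k : 'I_n -> nat) :
  (forall i j : 'I_n, i != j -> (z i j)^* * z i j = 1) ->
  (forall i, lin (V i)) -> (forall i, lin (Vs i)) ->
  doubly_noncommuting z V Vs ->
  (forall i j, i != j -> forall x, Vs i (Vs j x) = z i j *: Vs j (Vs i x)) ->
  forall i (t : seq 'I_n), i \notin t ->
  forall Y : H -> H, lin Y -> (forall x, Vs i (Y x) = Y (Vs i x)) ->
  forall x, Vs i (opprod [seq iter (k j) (V j) | j <- t]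
                   (Y (opprod [seq iter (k j) (Vs j) | j <- rev t] x)))
          = opprod [seq iter (k j) (V j) | j <- t]
                   (Y (opprod [seq iter (k j) (Vs j) | j <- rev t] (Vs i x))).
Proof.
move=> hz1 hV hVs hdn hss i; elim=> [|j t IH] it Y hY hYc x; first exact: hYc.
move: it; rewrite inE negb_or => /andP [ij it].
rewrite rev_cons map_rcons !opprod_rcons /=.
pose Z := fun w => opprod [seq iter (k j) (V j) | j <- t]
                   (Y (opprod [seq iter (k j) (Vs j) | j <- rev t] w)).
have hZ : lin Z.
  by move=> a u v; rewrite /Z (lin_opprod _ _ (fun j => lin_iter (k j) (hVs j))) hY (lin_opprod _ _ (fun j => lin_iter (k j) (hV j))).
exact: (K2 hz1 hV hVs hdn hss _ _ ij hZ (IH it Y hY hYc)).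
Qed.

Lemma G (C : numClosedFieldType) (H : lmodType C)
  (n : nat) (z : 'I_n -> 'I_n -> C) (V Vs B : 'I_n -> H -> H) (k : 'I_n -> nat) :
  (forall i j : 'I_n, i != j -> (z i j)^* * z i j = 1) ->
  (forall i, lin (V i)) -> (forall i, lin (Vs i)) -> (forall i, lin (B i)) ->
  doubly_noncommuting z V Vs ->
  (forall i j, i != j -> forall x, Vs i (Vs j x) = z i j *: Vs j (Vs i x)) ->
  (forall i j, i != j -> forall x, B i (V j x) = V j (B i x)) ->
  (forall i j, i != j -> forall x, Vs j (B i x) = B i (Vs j x)) ->
  forall s : seq 'I_n, uniq s ->
  forall x : H,
     opprod [seq (iter (k i) (V i) \o B i \o iter (k i) (Vs i)) | i <- s] x
     = (opprod [seq iter (k i) (V i) | i <- s]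
        \o opprod [seq B i | i <- s]
        \o opprod [seq iter (k i) (Vs i) | i <- rev s]) x.
Proof.
move=> hz1 hV hVs hB hdn hss hBV hBVs; elim=> [|i t IH] //= /andP [it ut] x.
rewrite IH // rev_cons map_rcons opprod_rcons /=.
have W : forall w, Vs i (opprod [seq iter (k j) (V j) | j <- t]
                   (opprod [seq B j | j <- t] (opprod [seq iter (k j) (Vs j) | j <- rev t] w)))
          = opprod [seq iter (k j) (V j) | j <- t]
                   (opprod [seq B j | j <- t] (opprod [seq iter (k j) (Vs j) | j <- rev t] (Vs i w))).
  apply: (K3 k hz1 hV hVs hdn hss i t it).
    exact: (lin_opprod _ _ hB).
  apply: opprod_comm => j jt y; apply: hBVs.
  by apply: contraNneq it => <-.
rewrite -(iter_comm (Vs i) _ (k i) (fun w => esym (W w))).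
congr (iter (k i) (V i) _).
apply: opprod_comm => j jt y; apply: iter_comm => u; apply: hBV.
by apply: contraNneq it => ->.
Qed.

Lemma opprod_id (T : Type) (I : Type) (s : seq I) (x : T) :
  opprod [seq (@id T) | i <- s] x = x.
Proof. by elim: s. Qed.

Theorem lemma3p3 (C : numClosedFieldType) (H : lmodType C)
  (dot : H -> H -> C) (n : nat) (z : 'I_n -> 'I_n -> C)
  (V Vs : 'I_n -> {linear H -> H}) (s : seq 'I_n) (k : 'I_n -> nat) :
  inner_product dot ->
  (forall i j : 'I_n, i != j -> `|z i j| = 1) ->
  (forall i j : 'I_n, i != j -> z j i = (z i j)^*) ->
  (forall i : 'I_n, op_adjoint dot (V i) (Vs i)) ->
  (forall i : 'I_n, op_isometry dot (V i)) ->
  doubly_noncommuting z (fun i => V i : H -> H) (fun i => Vs i : H -> H) ->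
  uniq s ->
  (forall x : H,
     opprod [seq (iter (k i) (V i) \o (fun y => y - V i (Vs i y))
                   \o iter (k i) (Vs i)) | i <- s] x
     = (opprod [seq iter (k i) (V i) | i <- s]
        \o opprod [seq (fun y => y - V i (Vs i y)) | i <- s]
        \o opprod [seq iter (k i) (Vs i) | i <- rev s]) x)
  /\
  (forall x : H,
     opprod [seq (iter (k i) (V i) \o iter (k i) (Vs i)) | i <- s] x
     = (opprod [seq iter (k i) (V i) | i <- s]
        \o opprod [seq iter (k i) (Vs i) | i <- rev s]) x).
Proof.
move=> hd hn hzc adj iso hdn us.
pose V' := fun i => (V i : H -> H).
pose Vs' := fun i => (Vs i : H -> H).
have hz1 : forall i j : 'I_n, i != j -> (z i j)^* * z i j = 1.
  by move=> i j ij; rewrite -normCKC hn // expr1n.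
have hV : forall i, lin (V' i) by move=> i; exact: lin_linear.
have hVs : forall i, lin (Vs' i) by move=> i; exact: lin_linear.
have hss : forall i j, i != j -> forall x, Vs i (Vs j x) = z i j *: Vs j (Vs i x) := VsVs hd hz1 hzc hV adj iso hdn.
have hvv : forall i j, i != j -> forall x, V i (V j x) = z i j *: V j (V i x) := VV hd hz1 hzc hV adj iso hdn.
have hdn' : forall i j, i != j -> forall x, Vs i (V j x) = (z i j)^* *: V j (Vs i x) := hdn.
split.
  move=> x; have := (G (fun i y => y - V i (Vs i y)) k hz1 hV hVs _ hdn hss _ _ s us x). apply.

  - by move=> i; exact: (lin_B (hV i) (hVs i)).
  - move=> i j ij y /=; rewrite /V' linearB; congr (_ - _).
    rewrite hdn' // linearZZ hvv //. rewrite scalerA hz1 //  scale1r //.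
  - move=> i j ij y /=; rewrite /Vs' linearB; congr (_ - _).
    have ji : j != i by rewrite eq_sym.
    by rewrite hdn' // hss // linearZZ scalerA hz1 // scale1r.
move=> x.
have := G (fun _ => id) k hz1 hV hVs (fun _ => @lin_id C H) hdn hss
  (fun _ _ _ _ => erefl) (fun _ _ _ _ => erefl) s us x.
by rewrite /= opprod_id.
Qed.
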